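(* Let $w$ be a word over $\{L,R\}$ and suppose $w$ forces the word $u$. Then $u\in\mathcal{L}_w$.
   Context: An interval map is a continuous map $f\colon I\to I$ on a compact interval $I=[a,b]$, $a<b$. Words are finite strings (including the empty word) over $\{L,R\}$; $|w|$ is the length. For $x\in I$ put $x_1=x$, $x_{j+1}=f(x_j)$. If $x$ is eventually fixed, let $n\ge 0$ be least such that $x_{n+1}$ is a fixed point of $f$; the orbit pattern tag of $x$ is the word of length $n$ whose $j$-th letter ($1\le j\le n$) is $L$ if $x_{j+1}<x_j$ and $R$ if $x_{j+1}>x_j$ (a fixed point has the empty word as tag). The map $f$ admits the tag $w$ if some point of $I$ has orbit pattern tag $w$. A word $w$ forces a word $u$ if every interval map admitting the tag $w$ also admits the tag $u$. A tail of $w$ is any word $v'$ with $w=vv'$ for some word $v$. For a set $\mathcal{S}$ of words, $\mathcal{S}^L$ (resp. $\mathcal{S}^R$) is the set of words in $\mathcal{S}$ starting with $L$ (resp. $R$), and $L(\mathcal{S})=\{Ls: s\in\mathcal{S}\}$, $R(\mathcal{S})=\{Rs:s\in\mathcal{S}\}$. The language $\mathcal{L}_w$ is defined recursively: if $|w|\le 2$, $\mathcal{L}_w$ is the set of tails of $w$; if $|w|>2$, then $\mathcal{L}_w=\mathcal{L}_{Rw'}\cup L(\mathcal{L}^R_{Rw'})$ when $w=LRw'$; $\mathcal{L}_w=\mathcal{L}_{LLw'}\cup L(\mathcal{L}^L_{LLw'})$ when $w=LLLw'$; $\mathcal{L}_w=\mathcal{L}_{LRw'}\cup L(\mathcal{L}_{LRw'})$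 when $w=LLRw'$; and dually (interchanging the letters $L$ and $R$ everywhere) when $w$ starts with $R$. *)

(* Defs.v *)
From Stdlib Require Import Reals List.
Import ListNotations.
Open Scope R_scope.

Inductive letter : Set := DL | DR.
Definition word := list letter.

Fixpoint iterf (f : R -> R) (n : nat) (x : R) : R :=
  match n with O => x | S k => f (iterf f k x) end.

Definition is_fixed (f : R -> R) (y : R) : Prop := f y = y.

Definition continuous_on_I (a b : R) (f : R -> R) : Prop :=
  forall x, a <= x <= b ->
  forall eps, 0 < eps -> exists delta, 0 < delta /\
    forall y, a <= y <= b -> Rabs (y - x) < delta -> Rabs (f y - f x) < eps.

Definition interval_map (a b : R) (f : R -> R) : Prop :=
  a < b /\ (forall x, a <= x <= b -> a <= f x <= b) /\ continuous_on_I a b f.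

(* x has orbit pattern tag w: with x_1 = x, x_{j+1} = f x_j, n = |w| is the
   least n with x_{n+1} fixed, and the j-th letter records whether
   x_{j+1} < x_j (L) or x_{j+1} > x_j (R).  Indices shifted to start at 0:
   x_{j+1} = iterf f j x. *)
Definition has_tag (f : R -> R) (x : R) (w : word) : Prop :=
  is_fixed f (iterf f (length w) x) /\
  (forall m, (m < length w)%nat -> ~ is_fixed f (iterf f m x)) /\
  (forall j, (j < length w)%nat ->
     (nth j w DL = DL /\ iterf f (S j) x < iterf f j x) \/
     (nth j w DL = DR /\ iterf f (S j) x > iterf f j x)).

Definition admits (a b : R) (f : R -> R) (w : word) : Prop :=
  exists x, a <= x <= b /\ has_tag f x w.

Definition forces (w u : word) : Prop :=
  forall (a b : R) (f : R -> R), interval_map a b f -> admits a b f w -> admits a b f u.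

Fixpoint tails (w : word) : list word :=
  w :: match w with [] => [] | _ :: t => tails t end.

Definition starting_with (c : letter) (S : list word) : list word :=
  filter (fun s => match s with
                   | DL :: _ => match c with DL => true | DR => false end
                   | DR :: _ => match c with DL => false | DR => true end
                   | [] => false end) S.

Definition prefix_all (c : letter) (S : list word) : list word := map (cons c) S.

Fixpoint Lang (w : word) : list word :=
  match w with
  | [] => tails w
  | a :: t =>
    match t with
    | [] | [_] => tails w
    | b :: c :: _ =>
      match a, b, c with
      | DL, DR, _  => Lang t ++ prefix_all DL (starting_with DR (Lang t))
      | DL, DL, DL => Lang t ++ prefix_all DL (starting_with DL (Lang t))
      | DL, DL, DR => Lang t ++ prefix_all DL (Lang t)
      | DR, DL, _  => Lang t ++ prefix_all DR (starting_with DL (Lang t))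
      | DR, DR, DR => Lang t ++ prefix_all DR (starting_with DR (Lang t))
      | DR, DR, DL => Lang t ++ prefix_all DR (Lang t)
      end
    end
  end.

(* Main.v *)
Require Import Defs.
From Stdlib Require Import Reals List Lra Lia.
Import ListNotations.
Open Scope R_scope.

Definition Lip (f : R -> R) : Prop :=
  exists K, 0 <= K /\ forall x y, Rabs (f x - f y) <= K * Rabs (x - y).

Lemma Lip_cont f : Lip f -> continuity f.
Proof.
  intros [K [HK H]] x. unfold continuity_pt, continue_in, limit1_in, limit_in.
  intros eps Heps. exists (eps / (K+1)). split.
  - apply Rdiv_lt_0_compat; lra.
  - intros y [_ Hy]. simpl in *. unfold R_dist in *.
    eapply Rle_lt_trans. apply H.
    assert (K * Rabs (y - x) <= K * (eps / (K+1))) by (apply Rmult_le_compat_l; lra).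
    assert (K * (eps/(K+1)) < eps).
    { unfold Rdiv. apply Rmult_lt_reg_r with (K+1). lra.
      rewrite Rmult_assoc, Rmult_assoc, Rinv_l by lra. nra. }
    lra.
Qed.

Lemma Lip_cont_I a b f : Lip f -> continuous_on_I a b f.
Proof.
  intros [K [HK H]] x _ eps Heps. exists (eps / (K+1)). split.
  - apply Rdiv_lt_0_compat; lra.
  - intros y _ Hy.
    eapply Rle_lt_trans. apply H.
    assert (K * Rabs (y - x) <= K * (eps / (K+1))) by (apply Rmult_le_compat_l; lra).
    assert (K * (eps/(K+1)) < eps).
    { unfold Rdiv. apply Rmult_lt_reg_r with (K+1). lra.
      rewrite Rmult_assoc, Rmult_assoc, Rinv_l by lra. nra. }
    lra.
Qed.

Lemma Lip_shift f v : Lip f -> Lip (fun z => f z - v).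
Proof.
  intros [K [HK H]]. exists K. split; auto. intros x y.
  replace (f x - v - (f y - v)) with (f x - f y) by ring. apply H.
Qed.

Lemma IVT_le f x y v : Lip f -> x < y -> f x < v -> v < f y ->
  exists z, x <= z <= y /\ f z = v.
Proof.
  intros Hf Hxy H1 H2.
  destruct (IVT (fun z => f z - v) x y (Lip_cont _ (Lip_shift f v Hf)) Hxy) as [z [Hz Hz2]];
  try lra. exists z. split; auto; lra.
Qed.

Lemma iterf_S f n x : iterf f (S n) x = iterf f n (f x).
Proof. induction n; simpl; auto. simpl in IHn. rewrite IHn. auto. Qed.

Lemma tag_cons f z s : has_tag f (f z) s -> f z <> z ->
  (f z < z -> has_tag f z (DL :: s)) /\ (f z > z -> has_tag f z (DR :: s)).
Proof.
  intros [H1 [H2 H3]] Hz.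
  assert (G: forall c, (c = DL -> f z < z) -> (c = DR -> f z > z) -> has_tag f z (c :: s)).
  { intros c Hc1 Hc2. split; [|split].
    - simpl length. rewrite iterf_S. auto.
    - intros m Hm. destruct m. simpl. unfold is_fixed. auto.
      rewrite iterf_S. apply H2. simpl in Hm. lia.
    - intros j Hj. destruct j.
      + simpl. destruct c; [left|right]; split; auto.
      + simpl nth. rewrite (iterf_S f (S j) z), (iterf_S f j z). apply H3. simpl in Hj. lia. }
  split; intros; apply G; intros; auto; try discriminate; lra.
Qed.

Lemma tag_uncons f z c s : has_tag f z (c :: s) ->
  has_tag f (f z) s /\ (c = DL -> f z < z) /\ (c = DR -> f z > z).
Proof.
  intros [H1 [H2 H3]]. split; [split; [|split]|].
  - simpl length in H1. rewrite iterf_S in H1. auto.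
  - intros m Hm. rewrite <- iterf_S. apply H2. simpl. lia.
  - intros j Hj. specialize (H3 (S j)). simpl nth in H3. rewrite (iterf_S f (S j) z), (iterf_S f j z) in H3.
    apply H3. simpl. lia.
  - specialize (H3 0%nat). simpl in H3. destruct H3 as [[-> H]|[-> H]]. lia.
    split; intros; auto; discriminate. split; intros; auto; discriminate.
Qed.

Lemma tag_fixed f z s : has_tag f z s -> is_fixed f z -> s = [].
Proof.
  intros [H1 [H2 H3]] Hf. destruct s; auto. exfalso. apply (H2 0%nat). simpl; lia. exact Hf.
Qed.

Lemma tag_nil f z : has_tag f z [] -> f z = z.
Proof. intros [H _]. exact H. Qed.

Lemma tag_transfer f g a b z s :
  (forall y, a <= y <= b -> f y = g y) ->
  (forall y, a <= y <= b -> a <= f y <= b) ->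
  a <= z <= b -> has_tag f z s -> has_tag g z s.
Proof.
  intros Hag Hdom Hz [H1 [H2 H3]].
  assert (It : forall n, iterf f n z = iterf g n z /\ a <= iterf f n z <= b).
  { induction n; simpl; auto. destruct IHn as [E D]. rewrite <- E.
    split; [apply Hag|apply Hdom]; auto. }
  assert (Fx : forall v, a <= v <= b -> (is_fixed f v <-> is_fixed g v)).
  { intros v Hv. unfold is_fixed. rewrite Hag; tauto. }
  split; [|split].
  - destruct (It (length s)) as [E D]. rewrite <- E. apply Fx; auto.
  - intros m Hm. destruct (It m) as [E D]. rewrite <- E. rewrite <- Fx by auto. auto.
  - intros j Hj. destruct (It j) as [E D]. destruct (It (S j)) as [E' D'].
    rewrite <- E, <- E'. auto.
Qed.

Lemma tag_transfer2 f g a b z s :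
  (forall y, a <= y <= b -> f y = g y) ->
  (forall y, a <= y <= b -> a <= f y <= b) ->
  a <= z <= b -> has_tag g z s -> has_tag f z s.
Proof.
  intros Hag Hdom Hz H. apply (tag_transfer g f a b); auto.
  intros y Hy. symmetry; auto. intros y Hy. rewrite <- Hag; auto.
Qed.

Fixpoint cntL (w : word) : nat := match w with [] => 0 | DL :: t => S (cntL t) | DR :: t => cntL t end.
Fixpoint cntR (w : word) : nat := match w with [] => 0 | DR :: t => S (cntR t) | DL :: t => cntR t end.
Definition Aw w := - INR (cntR w).
Definition Bw w := INR (cntL w).
Definition st (w : word) : R := match w with [] => 0 | DL :: _ => Bw w | DR :: _ => Aw w end.

Definition extL (g : R -> R) (b x : R) : R -> R :=
  fun y => g (Rmin y b) + (x - g b) * Rmin (Rmax (y - b) 0) 1.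
Definition extR (g : R -> R) (a x : R) : R -> R :=
  fun y => g (Rmax y a) + (x - g a) * Rmin (Rmax (a - y) 0) 1.

Fixpoint F (w : word) : R -> R :=
  match w with
  | [] => fun _ => 0
  | DL :: t => extL (F t) (Bw t) (st t)
  | DR :: t => extR (F t) (Aw t) (st t)
  end.

Definition Inv (w : word) : Prop :=
  Aw w <= 0 <= Bw w /\ F w 0 = 0 /\
  (forall y, Aw w <= y <= Bw w -> Aw w <= F w y <= Bw w) /\
  (forall y, Aw w <= y <= Bw w -> (y < 0 -> y < F w y) /\ (0 < y -> F w y < y)) /\
  Lip (F w) /\
  Aw w <= st w <= Bw w /\ has_tag (F w) (st w) w /\
  (exists n, iterf (F w) n (Aw w) = 0) /\ (exists n, iterf (F w) n (Bw w) = 0) /\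
  (forall y s, Aw w <= y <= Bw w -> has_tag (F w) y s -> In s (Lang w)).

Lemma Inv_nil : Inv [].
Proof.
  unfold Inv, Aw, Bw; simpl. rewrite Ropp_0.
  split; [lra|split; [auto|split; [intros; lra|split; [intros; lra|split]]]].
  - exists 0. split; [lra|]. intros. rewrite Rminus_0_r, Rabs_R0. lra.
  - split; [lra|split; [|split; [exists 0%nat; auto|split; [exists 0%nat; auto|]]]].
    + split; [|split]; simpl; auto. unfold is_fixed. auto. intros; lia. intros; lia.
    + intros y s Hy Hs. assert (y = 0) by lra. subst.
      rewrite (tag_fixed _ _ _ Hs) by (unfold is_fixed; auto). simpl; auto.
Qed.

Lemma Rmin_lip a b c : Rabs (Rmin a c - Rmin b c) <= Rabs (a - b).
Proof. unfold Rmin, Rabs; repeat destruct Rle_dec; repeat destruct Rcase_abs; lra. Qed.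
Lemma Rmax_lip a b c : Rabs (Rmax a c - Rmax b c) <= Rabs (a - b).
Proof. unfold Rmax, Rabs; repeat destruct Rle_dec; repeat destruct Rcase_abs; lra. Qed.
Lemma h_lip a b c : Rabs (Rmin (Rmax (a - c) 0) 1 - Rmin (Rmax (b - c) 0) 1) <= Rabs (a - b).
Proof.
  eapply Rle_trans. apply Rmin_lip. eapply Rle_trans. apply Rmax_lip.
  replace (a - c - (b - c)) with (a - b) by ring. lra.
Qed.
Lemma h_lip' a b c : Rabs (Rmin (Rmax (c - a) 0) 1 - Rmin (Rmax (c - b) 0) 1) <= Rabs (a - b).
Proof.
  eapply Rle_trans. apply Rmin_lip. eapply Rle_trans. apply Rmax_lip.
  replace (c - a - (c - b)) with (-(a - b)) by ring. rewrite Rabs_Ropp. lra.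
Qed.

Lemma Lip_extL g b x : Lip g -> Lip (extL g b x).
Proof.
  intros [K [HK H]]. exists (K + Rabs (x - g b)). split.
  { pose proof (Rabs_pos (x - g b)). lra. }
  intros y1 y2. unfold extL.
  replace (g (Rmin y1 b) + (x - g b) * Rmin (Rmax (y1 - b) 0) 1 -
   (g (Rmin y2 b) + (x - g b) * Rmin (Rmax (y2 - b) 0) 1)) with
   ((g (Rmin y1 b) - g (Rmin y2 b)) + (x - g b) * (Rmin (Rmax (y1 - b) 0) 1 - Rmin (Rmax (y2 - b) 0) 1)) by ring.
  eapply Rle_trans. apply Rabs_triang. rewrite Rabs_mult.
  pose proof (H (Rmin y1 b) (Rmin y2 b)). pose proof (Rmin_lip y1 y2 b).
  pose proof (h_lip y1 y2 b). pose proof (Rabs_pos (x - g b)).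
  assert (K * Rabs (Rmin y1 b - Rmin y2 b) <= K * Rabs (y1 - y2)) by (apply Rmult_le_compat_l; lra).
  assert (Rabs (x - g b) * Rabs (Rmin (Rmax (y1 - b) 0) 1 - Rmin (Rmax (y2 - b) 0) 1) <= Rabs (x - g b) * Rabs (y1 - y2)) by (apply Rmult_le_compat_l; lra).
  lra.
Qed.

Lemma Lip_extR g a x : Lip g -> Lip (extR g a x).
Proof.
  intros [K [HK H]]. exists (K + Rabs (x - g a)). split.
  { pose proof (Rabs_pos (x - g a)). lra. }
  intros y1 y2. unfold extR.
  replace (g (Rmax y1 a) + (x - g a) * Rmin (Rmax (a - y1) 0) 1 -
   (g (Rmax y2 a) + (x - g a) * Rmin (Rmax (a - y2) 0) 1)) with
   ((g (Rmax y1 a) - g (Rmax y2 a)) + (x - g a) * (Rmin (Rmax (a - y1) 0) 1 - Rmin (Rmax (a - y2) 0) 1)) by ring.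
  eapply Rle_trans. apply Rabs_triang. rewrite Rabs_mult.
  pose proof (H (Rmax y1 a) (Rmax y2 a)). pose proof (Rmax_lip y1 y2 a).
  pose proof (h_lip' y1 y2 a). pose proof (Rabs_pos (x - g a)).
  assert (K * Rabs (Rmax y1 a - Rmax y2 a) <= K * Rabs (y1 - y2)) by (apply Rmult_le_compat_l; lra).
  assert (Rabs (x - g a) * Rabs (Rmin (Rmax (a - y1) 0) 1 - Rmin (Rmax (a - y2) 0) 1) <= Rabs (x - g a) * Rabs (y1 - y2)) by (apply Rmult_le_compat_l; lra).
  lra.
Qed.

Lemma extL_old g b x y : y <= b -> extL g b x y = g y.
Proof.
  intros H. unfold extL. rewrite Rmin_left by lra. rewrite Rmax_right by lra.
  rewrite Rmin_left by lra. ring.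
Qed.
Lemma extL_new g b x y : b <= y <= b + 1 -> extL g b x y = g b + (x - g b) * (y - b).
Proof.
  intros H. unfold extL. rewrite Rmin_right by lra. rewrite Rmax_left by lra.
  rewrite Rmin_left by lra. ring.
Qed.
Lemma extR_old g a x y : a <= y -> extR g a x y = g y.
Proof.
  intros H. unfold extR. rewrite Rmax_left by lra. rewrite Rmax_right by lra.
  rewrite Rmin_left by lra. ring.
Qed.
Lemma extR_new g a x y : a - 1 <= y <= a -> extR g a x y = g a + (x - g a) * (a - y).
Proof.
  intros H. unfold extR. rewrite Rmax_right by lra. rewrite Rmax_left by lra.
  rewrite Rmin_left by lra. ring.
Qed.

Lemma iter_agree f g a b z n :
  (forall y, a <= y <= b -> f y = g y) ->
  (forall y, a <= y <= b -> a <= g y <= b) ->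
  a <= z <= b -> iterf f n z = iterf g n z /\ a <= iterf g n z <= b.
Proof.
  intros Hag Hdom Hz. induction n; simpl; auto. destruct IHn as [E D]. rewrite E.
  split; [apply Hag|apply Hdom]; auto.
Qed.

Lemma iter_dom g a b z n :
  (forall y, a <= y <= b -> a <= g y <= b) -> a <= z <= b -> a <= iterf g n z <= b.
Proof. intros Hdom Hz. induction n; simpl; auto. Qed.

Lemma fixed_zero g a b v :
  (forall y, a <= y <= b -> (y < 0 -> y < g y) /\ (0 < y -> g y < y)) ->
  a <= v <= b -> g v = v -> v = 0.
Proof.
  intros H Hv Hf. destruct (H v Hv) as [H1 H2].
  destruct (Rtotal_order v 0) as [?|[?|?]]; auto; [specialize (H1 H0)|specialize (H2 H0)]; lra.
Qed.

Lemma tag_L g v s : g v < v -> has_tag g v s -> exists s', s = DL :: s'.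
Proof.
  intros H Ht. destruct s as [|c s'].
  - apply tag_nil in Ht. lra.
  - exists s'. destruct c; auto. apply tag_uncons in Ht. destruct Ht as [_ [_ H2]].
    specialize (H2 eq_refl). lra.
Qed.
Lemma tag_R g v s : g v > v -> has_tag g v s -> exists s', s = DR :: s'.
Proof.
  intros H Ht. destruct s as [|c s'].
  - apply tag_nil in Ht. lra.
  - exists s'. destruct c; auto. apply tag_uncons in Ht. destruct Ht as [_ [H2 _]].
    specialize (H2 eq_refl). lra.
Qed.

Lemma pos_hit g a b :
  (forall y, a <= y <= b -> a <= g y <= b) ->
  (forall y, a <= y <= b -> (y < 0 -> y < g y) /\ (0 < y -> g y < y)) ->
  forall n y, a <= y <= b -> 0 < y -> iterf g n y = 0 -> exists z, 0 < z <= b /\ g z <= 0.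
Proof.
  intros Hd HP n. induction n; intros y Hy Hp Hi.
  - simpl in Hi. lra.
  - rewrite iterf_S in Hi. destruct (Rle_dec (g y) 0).
    + exists y. split; auto; lra.
    + apply (IHn (g y)); auto. lra.
Qed.

Lemma neg_hit g a b :
  (forall y, a <= y <= b -> a <= g y <= b) ->
  (forall y, a <= y <= b -> (y < 0 -> y < g y) /\ (0 < y -> g y < y)) ->
  forall n y, a <= y <= b -> y < 0 -> iterf g n y = 0 -> exists z, a <= z < 0 /\ 0 <= g z.
Proof.
  intros Hd HP n. induction n; intros y Hy Hp Hi.
  - simpl in Hi. lra.
  - rewrite iterf_S in Hi. destruct (Rle_dec 0 (g y)).
    + exists y. split; auto; lra.
    + apply (IHn (g y)); auto. lra.
Qed.

Lemma convex a b u x l : a <= u <= b -> a <= x <= b -> 0 <= l <= 1 -> a <= u + (x - u) * l <= b.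
Proof.
  intros. replace (u + (x - u) * l) with ((1 - l) * u + l * x) by ring.
  assert ((1-l) * a <= (1-l) * u) by (apply Rmult_le_compat_l; lra).
  assert ((1-l) * u <= (1-l) * b) by (apply Rmult_le_compat_l; lra).
  assert (l * a <= l * x) by (apply Rmult_le_compat_l; lra).
  assert (l * x <= l * b) by (apply Rmult_le_compat_l; lra).
  lra.
Qed.

Lemma Lang_sub a t s : In s (Lang t) -> In s (Lang (a :: t)).
Proof.
  intros H. destruct t as [|b [|c r]].
  - simpl in H. destruct H as [<-|[]]. destruct a; simpl; auto.
  - simpl in H. destruct a, b; simpl; tauto.
  - destruct a, b, c; simpl Lang at 1; apply in_or_app; left; exact H.
Qed.

Lemma in_ext c d L s : In s L -> (match s with DL :: _ => d = DL | DR :: _ => d = DR | [] => False end) ->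
  In (c :: s) (prefix_all c (starting_with d L)).
Proof.
  intros H Hs. unfold prefix_all. apply in_map. unfold starting_with. apply filter_In.
  split; auto. destruct s as [|[|] ?]; try contradiction; subst; auto.
Qed.

Lemma newtag_L t s lam : Inv t -> 0 < lam <= 1 ->
  has_tag (F t) (F t (Bw t) + (st t - F t (Bw t)) * lam) s -> In (DL :: s) (Lang (DL :: t)).
Proof.
  intros [Hab [H0 [Hdom [HP [Hlip [Hst [Htag [[na Hna] [[nb Hnb] H5]]]]]]]]] Hl Hs.
  remember (F t) as g. remember (Aw t) as a. remember (Bw t) as b. remember (st t) as x.
  set (v := g b + (x - g b) * lam) in *.
  assert (Hv : a <= v <= b) by (apply convex; auto; try apply Hdom; lra).
  assert (Hsv : In s (Lang t)) by (apply (H5 v); auto).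
  destruct t as [|c1 [|c2 r]].
  - simpl in Hsv. destruct Hsv as [<-|[]]. simpl; auto.
  - simpl in Hsv. destruct Hsv as [<-|[<-|[]]].
    + destruct c1; simpl; auto.
    + destruct c1; [simpl; auto|].
      exfalso. simpl in Heqb, Heqx. unfold Aw in Heqa. simpl in Heqa.
      assert (b = 0) by (rewrite Heqb; reflexivity).
      assert (Hgb0 : g b = 0) by (rewrite H; auto).
      assert (Ha1 : a = -1) by (rewrite Heqa; simpl; ring).
      assert (Hxa : x = a) by (rewrite Heqx, Heqa; unfold Aw; reflexivity).
      apply tag_nil in Hs. destruct (HP v Hv) as [Hn _].
      assert (v < 0) by (unfold v; rewrite Hgb0, Hxa, Ha1; nra).
      specialize (Hn H1). lra.
  - assert (Hxa : c1 = DR -> x = a) by (intros ->; subst; reflexivity).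
    assert (Hxb : c1 = DL -> x = b) by (intros ->; subst; reflexivity).
    destruct c1.
    + specialize (Hxb eq_refl). rewrite Hxb in Htag, Hst. clear Hxa.
      destruct (tag_uncons _ _ _ _ Htag) as [Ht2 [Hlt _]]. specialize (Hlt eq_refl).
      assert (Hgb : a <= g b <= b) by (apply Hdom; lra).
      destruct c2.
      * destruct (tag_uncons _ _ _ _ Ht2) as [_ [Hlt2 _]]. specialize (Hlt2 eq_refl).
        assert (Hgp : 0 < g b).
        { destruct (Rtotal_order (g b) 0) as [Hn|[Hn|Hn]]; auto.
          - destruct (HP (g b) Hgb) as [Hq _]. specialize (Hq Hn). lra.
          - rewrite Hn, H0 in Hlt2. lra. }
        assert (Hvp : 0 < v).
        { subst v. rewrite Hxb. assert (0 <= (b - g b) * lam) by (apply Rmult_le_pos; lra). lra. }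
        destruct (HP v Hv) as [_ Hq]. specialize (Hq Hvp).
        destruct (tag_L _ _ _ Hq Hs) as [s' ->].
        change (In (DL :: DL :: s') (Lang (DL :: DL :: r) ++ prefix_all DL (starting_with DL (Lang (DL :: DL :: r))))).
        apply in_or_app. right. apply in_ext; auto.
      * change (In (DL :: s) (Lang (DL :: DR :: r) ++ prefix_all DL (Lang (DL :: DR :: r)))).
        apply in_or_app. right. unfold prefix_all. apply in_map. auto.
    + specialize (Hxa eq_refl). rewrite Hxa in Htag, Hst. clear Hxb.
      destruct (tag_uncons _ _ _ _ Htag) as [_ [_ Hgt]]. specialize (Hgt eq_refl).
      assert (Han : a < 0).
      { destruct (Rtotal_order a 0) as [?|[Hn|?]]; auto; try lra. rewrite Hn, H0 in Hgt. lra. }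
      assert (Hgb : a <= g b <= b) by (apply Hdom; lra).
      change (In (DL :: s) (Lang (DR :: c2 :: r) ++ prefix_all DL (starting_with DR (Lang (DR :: c2 :: r))))).
      apply in_or_app.
      destruct (Rlt_dec v 0) as [Hvn|Hvn].
      * right. destruct (HP v Hv) as [Hq _]. specialize (Hq Hvn).
        destruct (tag_R _ _ _ Hq Hs) as [s' ->]. apply in_ext; auto.
      * left. apply Rnot_lt_le in Hvn.
        assert (Hvdef : v = (1 - lam) * g b + lam * a) by (unfold v; rewrite Hxa; ring).
        assert (Hlam1 : lam < 1).
        { destruct (Rlt_dec lam 1); auto. assert (lam = 1) by lra.
          rewrite H in Hvdef. lra. }
        assert (Hgbv : v < g b).
        { assert (lam * a < 0) by (apply Rmult_lt_0_compat_neg_r || nra).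
          assert (0 < (1 - lam) * g b) by lra.
          assert (0 < g b) by nra. nra. }
        assert (Hbp : 0 < b).
        { destruct (Rle_lt_dec b 0) as [Hn|Hn]; auto. assert (Hb0 : b = 0) by lra.
          rewrite Hb0, H0 in Hgbv. lra. }
        destruct (Rtotal_order v 0) as [?|[Hv0|Hvp]]; [lra| |].
        --
           assert (s = []).
           { apply (tag_fixed g v); auto. unfold is_fixed. rewrite Hv0. auto. }
           subst s.
           destruct (pos_hit g a b Hdom HP nb b) as [z [Hz Hgz]]; auto; try lra.
           assert (Hzt : exists z', 0 < z' <= b /\ g z' = 0).
           { destruct (Rle_lt_or_eq_dec _ _ Hgz) as [Hlt|Heq].
             - assert (z < b).
               { destruct (Rle_lt_or_eq_dec _ _ (proj2 Hz)); auto. subst z. lra. }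
               destruct (IVT_le g z b 0 Hlip) as [z' [Hz' Hgz']]; auto; try lra.
               exists z'. split; auto; lra.
             - exists z. auto. }
           destruct Hzt as [z' [Hz' Hgz']].
           apply (H5 z'). lra.
           assert (Hfix : has_tag g (g z') []).
           { rewrite Hgz'. split; [|split]; simpl; try (intros; lia). unfold is_fixed. auto. }
           apply (tag_cons g z' [] Hfix); lra.
        -- destruct (IVT_le g 0 b v Hlip) as [z [Hz Hgz]]; auto; try lra.
           assert (Hz0 : 0 < z).
           { destruct (Rle_lt_or_eq_dec _ _ (proj1 Hz)); auto. subst z. lra. }
           destruct (HP z) as [_ Hq]. lra. specialize (Hq Hz0).
           apply (H5 z). lra.
           rewrite <- Hgz in Hs. apply (tag_cons g z s Hs); lra.
Qed.

Lemma newtag_R t s lam : Inv t -> 0 < lam <= 1 ->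
  has_tag (F t) (F t (Aw t) + (st t - F t (Aw t)) * lam) s -> In (DR :: s) (Lang (DR :: t)).
Proof.
  intros [Hab [H0 [Hdom [HP [Hlip [Hst [Htag [[na Hna] [[nb Hnb] H5]]]]]]]]] Hl Hs.
  remember (F t) as g. remember (Aw t) as a. remember (Bw t) as b. remember (st t) as x.
  set (v := g a + (x - g a) * lam) in *.
  assert (Hv : a <= v <= b) by (apply convex; auto; try apply Hdom; lra).
  assert (Hsv : In s (Lang t)) by (apply (H5 v); auto).
  destruct t as [|c1 [|c2 r]].
  - simpl in Hsv. destruct Hsv as [<-|[]]. simpl; auto.
  - simpl in Hsv. destruct Hsv as [<-|[<-|[]]].
    + destruct c1; simpl; auto.
    + destruct c1; [|simpl; auto].
      exfalso.
      assert (a = 0) by (rewrite Heqa; unfold Aw; simpl; ring).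
      assert (Hga0 : g a = 0) by (rewrite H; auto).
      assert (Hb1 : b = 1) by (rewrite Heqb; reflexivity).
      assert (Hxb : x = b) by (rewrite Heqx, Heqb; reflexivity).
      apply tag_nil in Hs. destruct (HP v Hv) as [_ Hn].
      assert (0 < v) by (unfold v; rewrite Hga0, Hxb, Hb1; nra).
      specialize (Hn H1). lra.
  - assert (Hxa : c1 = DR -> x = a) by (intros ->; subst; reflexivity).
    assert (Hxb : c1 = DL -> x = b) by (intros ->; subst; reflexivity).
    destruct c1.
    + specialize (Hxb eq_refl). rewrite Hxb in Htag, Hst. clear Hxa.
      destruct (tag_uncons _ _ _ _ Htag) as [_ [Hlt _]]. specialize (Hlt eq_refl).
      assert (Hbp : 0 < b).
      { destruct (Rtotal_order b 0) as [?|[Hn|?]]; auto; try lra. rewrite Hn, H0 in Hlt. lra. }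
      assert (Hga : a <= g a <= b) by (apply Hdom; lra).
      change (In (DR :: s) (Lang (DL :: c2 :: r) ++ prefix_all DR (starting_with DL (Lang (DL :: c2 :: r))))).
      apply in_or_app.
      destruct (Rlt_dec 0 v) as [Hvn|Hvn].
      * right. destruct (HP v Hv) as [_ Hq]. specialize (Hq Hvn).
        destruct (tag_L _ _ _ Hq Hs) as [s' ->]. apply in_ext; auto.
      * left. apply Rnot_lt_le in Hvn.
        assert (Hvdef : v = (1 - lam) * g a + lam * b) by (unfold v; rewrite Hxb; ring).
        assert (Hlam1 : lam < 1).
        { destruct (Rlt_dec lam 1); auto. assert (lam = 1) by lra.
          rewrite H in Hvdef. lra. }
        assert (Hgav : g a < v).
        { assert (0 < lam * b) by nra.
          assert ((1 - lam) * g a < 0) by lra.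
          assert (g a < 0) by nra. nra. }
        assert (Han : a < 0).
        { destruct (Rle_lt_dec 0 a) as [Hn|Hn]; auto. assert (Ha0 : a = 0) by lra.
          rewrite Ha0, H0 in Hgav. lra. }
        destruct (Rtotal_order v 0) as [Hvp|[Hv0|?]]; [| |lra].
        -- destruct (IVT_le g a 0 v Hlip) as [z [Hz Hgz]]; auto; try lra.
           assert (Hz0 : z < 0).
           { destruct (Rle_lt_or_eq_dec _ _ (proj2 Hz)); auto. subst z. lra. }
           destruct (HP z) as [Hq _]. lra. specialize (Hq Hz0).
           apply (H5 z). lra.
           rewrite <- Hgz in Hs. apply (tag_cons g z s Hs); lra.
        -- assert (s = []).
           { apply (tag_fixed g v); auto. unfold is_fixed. rewrite Hv0. auto. }
           subst s.
           destruct (neg_hit g a b Hdom HP na a) as [z [Hz Hgz]]; auto; try lra.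
           assert (Hzt : exists z', a <= z' < 0 /\ g z' = 0).
           { destruct (Rle_lt_or_eq_dec _ _ Hgz) as [Hlt0|Heq].
             - assert (a < z).
               { destruct (Rle_lt_or_eq_dec _ _ (proj1 Hz)); auto. subst z. lra. }
               destruct (IVT_le g a z 0 Hlip) as [z' [Hz' Hgz']]; auto; try lra.
               exists z'. split; auto; lra.
             - exists z. auto. }
           destruct Hzt as [z' [Hz' Hgz']].
           apply (H5 z'). lra.
           assert (Hfix : has_tag g (g z') []).
           { rewrite Hgz'. split; [|split]; simpl; try (intros; lia). unfold is_fixed. auto. }
           apply (tag_cons g z' [] Hfix); lra.
    + specialize (Hxa eq_refl). rewrite Hxa in Htag, Hst. clear Hxb.
      destruct (tag_uncons _ _ _ _ Htag) as [Ht2 [_ Hgt]]. specialize (Hgt eq_refl).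
      assert (Hga : a <= g a <= b) by (apply Hdom; lra).
      destruct c2.
      * change (In (DR :: s) (Lang (DR :: DL :: r) ++ prefix_all DR (Lang (DR :: DL :: r)))).
        apply in_or_app. right. unfold prefix_all. apply in_map. auto.
      * destruct (tag_uncons _ _ _ _ Ht2) as [_ [_ Hgt2]]. specialize (Hgt2 eq_refl).
        assert (Hgn : g a < 0).
        { destruct (Rtotal_order (g a) 0) as [Hn|[Hn|Hn]]; auto.
          - rewrite Hn, H0 in Hgt2. lra.
          - destruct (HP (g a) Hga) as [_ Hq]. specialize (Hq Hn). lra. }
        assert (Hvn : v < 0).
        { unfold v. rewrite Hxa. assert ((a - g a) * lam <= 0).
          { assert (0 <= (g a - a) * lam) by (apply Rmult_le_pos; lra). nra. }
          lra. }
        destruct (HP v Hv) as [Hq _]. specialize (Hq Hvn).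
        destruct (tag_R _ _ _ Hq Hs) as [s' ->].
        change (In (DR :: DR :: s') (Lang (DR :: DR :: r) ++ prefix_all DR (starting_with DR (Lang (DR :: DR :: r))))).
        apply in_or_app. right. apply in_ext; auto.
Qed.

Lemma stepL t : Inv t -> Inv (DL :: t).
Proof.
  intros HI. pose proof HI as HI'.
  destruct HI' as [Hab [H0 [Hdom [HP [Hlip [Hst [Htag [[na Hna] [[nb Hnb] H5]]]]]]]]].
  assert (EF : F (DL :: t) = extL (F t) (Bw t) (st t)) by reflexivity.
  assert (EA : Aw (DL :: t) = Aw t) by reflexivity.
  assert (EB : Bw (DL :: t) = Bw t + 1) by (unfold Bw; simpl cntL; rewrite S_INR; auto).
  assert (ES : st (DL :: t) = Bw t + 1) by (rewrite <- EB; reflexivity).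
  unfold Inv. rewrite EF, EA, EB, ES.
  set (g := F t) in *. set (a := Aw t) in *. set (b := Bw t) in *. set (x := st t) in *.
  set (f := extL g b x).
  assert (Hag : forall y, a <= y <= b -> f y = g y) by (intros; apply extL_old; lra).
  assert (Hnew : forall y, b < y <= b + 1 -> f y = g b + (x - g b) * (y - b))
    by (intros; apply extL_new; lra).
  assert (Hgb : a <= g b <= b) by (apply Hdom; lra).
  assert (Hdom' : forall y, a <= y <= b + 1 -> a <= f y <= b).
  { intros y Hy. destruct (Rle_dec y b).
    - rewrite Hag by lra. apply Hdom; lra.
    - rewrite Hnew by lra. apply convex; auto; lra. }
  assert (Hf1 : f (b + 1) = x) by (rewrite Hnew by lra; ring).
  assert (Hdomf : forall y, a <= y <= b -> a <= f y <= b) by (intros; rewrite Hag; auto).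
  assert (Htx : has_tag f x t) by (apply (tag_transfer2 f g a b); auto).
  split; [lra|split; [rewrite Hag by lra; auto|split; [intros y Hy; specialize (Hdom' y Hy); lra|split]]].
  { intros y Hy. destruct (Rle_dec y b).
    - rewrite Hag by lra. apply HP; lra.
    - specialize (Hdom' y Hy). split; intros; lra. }
  split; [apply Lip_extL; auto|].
  split; [lra|].
  split.
  { rewrite <- Hf1 in Htx. apply (tag_cons f (b+1) t Htx); lra. }
  split.
  { exists na. destruct (iter_agree f g a b a na Hag Hdom) as [E _]. lra. rewrite E. auto. }
  split.
  { exists (S (length t)). rewrite iterf_S, Hf1.
    destruct (iter_agree f g a b x (length t) Hag Hdom) as [E D]. auto. rewrite E.
    apply (fixed_zero g a b); auto. destruct Htag as [Hfx _]. exact Hfx. }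
  intros y s Hy Hs. destruct (Rle_dec y b).
  - apply Lang_sub. apply (H5 y); [lra|]. apply (tag_transfer f g a b); auto. lra.
  - assert (Hfy : f y < y) by (specialize (Hdom' y Hy); lra).
    destruct (tag_L f y s Hfy Hs) as [s' ->].
    destruct (tag_uncons _ _ _ _ Hs) as [Hs' _].
    rewrite Hnew in Hs' by lra.
    apply (newtag_L t s' (y - b) HI). lra.
    apply (tag_transfer f g a b); auto. apply convex; auto; lra.
Qed.

Lemma stepR t : Inv t -> Inv (DR :: t).
Proof.
  intros HI. pose proof HI as HI'.
  destruct HI' as [Hab [H0 [Hdom [HP [Hlip [Hst [Htag [[na Hna] [[nb Hnb] H5]]]]]]]]].
  assert (EF : F (DR :: t) = extR (F t) (Aw t) (st t)) by reflexivity.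
  assert (EB : Bw (DR :: t) = Bw t) by reflexivity.
  assert (EA : Aw (DR :: t) = Aw t - 1) by (unfold Aw; simpl cntR; rewrite S_INR; ring).
  assert (ES : st (DR :: t) = Aw t - 1) by (rewrite <- EA; reflexivity).
  unfold Inv. rewrite EF, EA, EB, ES.
  set (g := F t) in *. set (a := Aw t) in *. set (b := Bw t) in *. set (x := st t) in *.
  set (f := extR g a x).
  assert (Hag : forall y, a <= y <= b -> f y = g y) by (intros; apply extR_old; lra).
  assert (Hnew : forall y, a - 1 <= y < a -> f y = g a + (x - g a) * (a - y))
    by (intros; apply extR_new; lra).
  assert (Hga : a <= g a <= b) by (apply Hdom; lra).
  assert (Hdom' : forall y, a - 1 <= y <= b -> a <= f y <= b).
  { intros y Hy. destruct (Rle_dec a y).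
    - rewrite Hag by lra. apply Hdom; lra.
    - rewrite Hnew by lra. apply convex; auto; lra. }
  assert (Hf1 : f (a - 1) = x) by (rewrite Hnew by lra; ring).
  assert (Hdomf : forall y, a <= y <= b -> a <= f y <= b) by (intros; rewrite Hag; auto).
  assert (Htx : has_tag f x t) by (apply (tag_transfer2 f g a b); auto).
  split; [lra|split; [rewrite Hag by lra; auto|split; [intros y Hy; specialize (Hdom' y Hy); lra|split]]].
  { intros y Hy. destruct (Rle_dec a y).
    - rewrite Hag by lra. apply HP; lra.
    - specialize (Hdom' y Hy). split; intros; lra. }
  split; [apply Lip_extR; auto|].
  split; [lra|].
  split.
  { rewrite <- Hf1 in Htx. apply (tag_cons f (a-1) t Htx); lra. }
  split.
  { exists (S (length t)). rewrite iterf_S, Hf1.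
    destruct (iter_agree f g a b x (length t) Hag Hdom) as [E D]. auto. rewrite E.
    apply (fixed_zero g a b); auto. destruct Htag as [Hfx _]. exact Hfx. }
  split.
  { exists nb. destruct (iter_agree f g a b b nb Hag Hdom) as [E _]. lra. rewrite E. auto. }
  intros y s Hy Hs. destruct (Rle_dec a y).
  - apply Lang_sub. apply (H5 y); [lra|]. apply (tag_transfer f g a b); auto. lra.
  - assert (Hfy : f y > y) by (specialize (Hdom' y Hy); lra).
    destruct (tag_R f y s Hfy Hs) as [s' ->].
    destruct (tag_uncons _ _ _ _ Hs) as [Hs' _].
    rewrite Hnew in Hs' by lra.
    apply (newtag_R t s' (a - y) HI). lra.
    apply (tag_transfer f g a b); auto. apply convex; auto; lra.
Qed.

Lemma Inv_all w : Inv w.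
Proof.
  induction w as [|c t IH]. apply Inv_nil. destruct c; [apply stepL|apply stepR]; auto.
Qed.

Theorem mainTheorem5 (w u : word) : forces w u -> In u (Lang w).
Proof.
  intros Hf. destruct w as [|c t].
  - destruct (Hf 0 1 (fun y => y)) as [x [Hx Hu]].
    + split; [lra|split; [auto|]]. intros x _ eps He. exists eps. split; auto.
    + exists 0. split; [lra|]. split; [|split]; simpl; try (intros; lia). unfold is_fixed. auto.
    + rewrite (tag_fixed _ _ _ Hu) by (unfold is_fixed; auto). simpl; auto.
  - pose proof (Inv_all (c :: t)) as HI.
    destruct HI as [Hab [H0 [Hdom [HP [Hlip [Hst [Htag [_ [_ H5]]]]]]]]].
    assert (Hlt : Aw (c :: t) < Bw (c :: t)).
    { unfold Aw, Bw. destruct c; cbn [cntL cntR].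
      - rewrite S_INR. pose proof (pos_INR (cntL t)). pose proof (pos_INR (cntR t)). lra.
      - rewrite S_INR. pose proof (pos_INR (cntL t)). pose proof (pos_INR (cntR t)). lra. }
    destruct (Hf (Aw (c :: t)) (Bw (c :: t)) (F (c :: t))) as [y [Hy Hu]].
    + split; auto. split; auto. apply Lip_cont_I; auto.
    + exists (st (c :: t)). auto.
    + apply (H5 y u); auto.
Qed.
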